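(* Let $L$ be a cosimplicial group, $b\in Z^1(L)$, and $h_b\colon F\to L$ the cosimplicial morphism with $h_b^1(a_1)=b$. Then the square \[\begin{array}{ccc}F&\xrightarrow{\iota_+}&F^+\\ {\scriptstyle h_b}\downarrow&&\downarrow{\scriptstyle \mathrm{Id}*h_b}\\ L&\xrightarrow{\iota_b}&L^b\end{array}\] is a pushout in the category of cosimplicial groups.
   Context: $F$ is the cosimplicial group with $F_n$ free on $a_1,\dots,a_n$, cofaces $d^0(a_j)=a_{j+1}$; for $1\le i\le n-1$, $d^i(a_j)=a_j$ ($j<i$), $d^i(a_i)=a_ia_{i+1}$, $d^i(a_j)=a_{j+1}$ ($j>i$); $d^n(a_j)=a_j$; codegeneracies $s^i(a_j)=a_j$ ($j\le i$), $s^i(a_{i+1})=e$, $s^i(a_j)=a_{j-1}$ ($j>i+1$). $Z^1(L)=\{b\in L_1: d^2(b)d^0(b)=d^1(b)\}$; cosimplicial morphisms $F\to L$ correspond bijectively to $Z^1(L)$ via $h\mapsto h^1(a_1)$. Construction of $L^b$ for $b\in Z^1(L)$: let $\overline F_0$ be the infinite cyclic group on $a_0$; put $b_1=b$, $b_{n+1}=d^{n+1}(b_n)$. Then $L^b_n=\overline F_0*L_n$ (free product), codegeneracies $s^i_b=\mathrm{Id}*s^i$, cofaces $d^i_b=\mathrm{Id}*d^i$ for $i>0$, and $d^0_b\colon L^b_{n-1}\to L^b_n$ is $d^0$ on $L_{n-1}$ and sends $a_0\mapsto a_0b_n$. $\iota_b\colon L\hookrightarrow L^b$ is induced by the inclusions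 $L_n\hookrightarrow\overline F_0*L_n$. $F^+:=F^{a_1}$ (note $a_1\in Z^1(F)$), with $\iota_+:=\iota_{a_1}$; $\mathrm{Id}*h_b\colon F^+\to L^b$ is the identity on $\overline F_0$ and $h_b$ on $F_n$. *)

(* Defs.v *)
(* Groups here are possibly
   infinite, so we use setoid groups: a carrier with an equivalence
   relation [geqv] and operations. *)
From mathcomp Require Import all_boot.
Set Implicit Arguments. Unset Strict Implicit. Unset Printing Implicit Defensive.

Record grp := Grp {
  gcar :> Type;
  geqv : gcar -> gcar -> Prop;
  gmul : gcar -> gcar -> gcar;
  ginv : gcar -> gcar;
  gone : gcar }.
Arguments gone {g}.

Record is_group (G : grp) : Prop := {
  geq_refl : forall x : G, geqv x x;
  geq_sym : forall x y : G, geqv x y -> geqv y x;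
  geq_trans : forall x y z : G, geqv x y -> geqv y z -> geqv x z;
  gmul_proper : forall x x' y y' : G, geqv x x' -> geqv y y' -> geqv (gmul x y) (gmul x' y');
  ginv_proper : forall x x' : G, geqv x x' -> geqv (ginv x) (ginv x');
  gmulA : forall x y z : G, geqv (gmul (gmul x y) z) (gmul x (gmul y z));
  gmul1l : forall x : G, geqv (gmul gone x) x;
  gmul1r : forall x : G, geqv (gmul x gone) x;
  gmulVl : forall x : G, geqv (gmul (ginv x) x) gone;
  gmulVr : forall x : G, geqv (gmul x (ginv x)) gone }.

Definition is_hom (G H : grp) (f : G -> H) : Prop :=
  (forall x y : G, geqv x y -> geqv (f x) (f y)) /\
  (forall x y : G, geqv (f (gmul x y)) (gmul (f x) (f y))).

(* [cof n i : C n -> C n.+1] is the coface d^i (0 <= i <= n+1);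
   [codeg n i : C n.+1 -> C n] is the codegeneracy s^i (0 <= i <= n).
   Values for out-of-range indices are irrelevant. *)
Record cgrp := CGrp {
  cG : nat -> grp;
  cof : forall n, nat -> cG n -> cG n.+1;
  codeg : forall n, nat -> cG n.+1 -> cG n }.
Arguments cof {c} n i _.
Arguments codeg {c} n i _.

Record is_cosimplicial_group (C : cgrp) : Prop := {
  cs_group : forall n, is_group (cG C n);
  cs_cof_hom : forall n i, i <= n.+1 -> is_hom (@cof C n i);
  cs_codeg_hom : forall n i, i <= n -> is_hom (@codeg C n i);
  cs_dd : forall n i j (x : cG C n), i < j -> j <= n.+2 ->
      geqv (cof n.+1 j (cof n i x)) (cof n.+1 i (cof n j.-1 x));
  cs_sd_lt : forall n i j (x : cG C n.+1), i < j -> j <= n.+1 ->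
      geqv (codeg n.+1 j (cof n.+1 i x)) (cof n i (codeg n j.-1 x));
  cs_sd_eq : forall n j (x : cG C n), j <= n ->
      geqv (codeg n j (cof n j x)) x;
  cs_sd_eqS : forall n j (x : cG C n), j <= n ->
      geqv (codeg n j (cof n j.+1 x)) x;
  cs_sd_gt : forall n i j (x : cG C n.+1), j.+1 < i -> i <= n.+2 ->
      geqv (codeg n.+1 j (cof n.+1 i x)) (cof n i.-1 (codeg n j x));
  cs_ss : forall n i j (x : cG C n.+2), i <= j -> j <= n ->
      geqv (codeg n j (codeg n.+1 i x)) (codeg n i (codeg n.+1 j.+1 x)) }.

Definition cmap (C D : cgrp) := forall n, cG C n -> cG D n.

Definition is_cmorph (C D : cgrp) (f : cmap C D) : Prop :=
  (forall n, is_hom (f n)) /\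
  (forall n i (x : cG C n), i <= n.+1 -> geqv (f n.+1 (cof n i x)) (cof n i (f n x))) /\
  (forall n i (x : cG C n.+1), i <= n -> geqv (f n (codeg n i x)) (codeg n i (f n.+1 x))).

Definition ccomp (A B C : cgrp) (g : cmap B C) (f : cmap A B) : cmap A C :=
  fun n x => g n (f n x).

Definition cmap_eq (C D : cgrp) (f g : cmap C D) : Prop :=
  forall n (x : cG C n), geqv (f n x) (g n x).

Definition is_pushout (A B C D : cgrp) (top : cmap A B) (left : cmap A C)
    (right : cmap B D) (bot : cmap C D) : Prop :=
  [/\ is_cosimplicial_group A, is_cosimplicial_group B,
      is_cosimplicial_group C & is_cosimplicial_group D] /\
  [/\ is_cmorph top, is_cmorph left, is_cmorph right & is_cmorph bot] /\
  cmap_eq (ccomp right top) (ccomp bot left) /\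
  (forall (M : cgrp), is_cosimplicial_group M ->
   forall (u : cmap B M) (v : cmap C M),
     is_cmorph u -> is_cmorph v -> cmap_eq (ccomp u top) (ccomp v left) ->
     exists w : cmap D M,
       [/\ is_cmorph w, cmap_eq (ccomp w right) u, cmap_eq (ccomp w bot) v &
           forall w' : cmap D M, is_cmorph w' ->
             cmap_eq (ccomp w' right) u -> cmap_eq (ccomp w' bot) v ->
             cmap_eq w' w]).

(* A word over letters A: (a, true) = a, (a, false) = a^-1. *)
Definition winv (A : Type) (w : seq (A * bool)) : seq (A * bool) :=
  rev (map (fun p => (p.1, ~~ p.2)) w).

Definition wext (A : Type) (H : grp) (phi : A -> H) (w : seq (A * bool)) : H :=
  foldr (fun p acc => gmul (if p.2 then phi p.1 else ginv (phi p.1)) acc) gone w.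

Inductive frel (A : Type) : seq (A * bool) -> seq (A * bool) -> Prop :=
| fr_refl w : frel w w
| fr_sym w w' : frel w w' -> frel w' w
| fr_trans w1 w2 w3 : frel w1 w2 -> frel w2 w3 -> frel w1 w3
| fr_cancel u v a s : frel (u ++ (a, s) :: (a, ~~ s) :: v) (u ++ v).

(* free group F_n on a_1..a_n; the letter o : 'I_n stands for a_(o+1) *)
Definition Fgrp (n : nat) : grp :=
  @Grp (seq ('I_n * bool)) (@frel 'I_n) cat (@winv 'I_n) [::].

(* the generator a_j of F_m (the empty word if j is out of range 1..m) *)
Definition fgen (m j : nat) : Fgrp m :=
  match j with
  | 0 => [::]
  | j'.+1 => oapp (fun o : 'I_m => [:: (o, true)]) [::] (insub j')
  end.

Definition Fcof (n i : nat) : Fgrp n -> Fgrp n.+1 :=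
  @wext _ (Fgrp n.+1) (fun o : 'I_n =>
    let j := (nat_of_ord o).+1 in
    if j < i then fgen n.+1 j
    else if j == i then (fgen n.+1 j ++ fgen n.+1 j.+1 : Fgrp n.+1)
    else fgen n.+1 j.+1).

Definition Fcodeg (n i : nat) : Fgrp n.+1 -> Fgrp n :=
  @wext _ (Fgrp n) (fun o : 'I_n.+1 =>
    let j := (nat_of_ord o).+1 in
    if j <= i then fgen n j
    else if j == i.+1 then ([::] : Fgrp n)
    else fgen n j.-1).

Definition Fc : cgrp := @CGrp Fgrp Fcof Fcodeg.

(* Letters: None = a_0 (generator of the infinite cyclic group \bar F_0),
   Some g = g in G.  Equality: congruence generated by free cancellation and
   the relations of G. *)
Inductive prel (G : grp) : seq (option G * bool) -> seq (option G * bool) -> Prop :=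
| pr_refl w : prel w w
| pr_sym w w' : prel w w' -> prel w' w
| pr_trans w1 w2 w3 : prel w1 w2 -> prel w2 w3 -> prel w1 w3
| pr_cancel u v a s : prel (u ++ (a, s) :: (a, ~~ s) :: v) (u ++ v)
| pr_mul u v (g h : G) :
    prel (u ++ (Some g, true) :: (Some h, true) :: v) (u ++ (Some (gmul g h), true) :: v)
| pr_one u v : prel (u ++ (Some (@gone G), true) :: v) (u ++ v)
| pr_inv u v (g : G) : prel (u ++ (Some g, false) :: v) (u ++ (Some (ginv g), true) :: v)
| pr_eq u v (g g' : G) : geqv g g' -> prel (u ++ (Some g, true) :: v) (u ++ (Some g', true) :: v).

Definition FP (G : grp) : grp :=
  @Grp (seq (option G * bool)) (@prel G) cat (@winv (option G)) [::].

Definition idstar_map (G H : grp) (f : G -> H) : FP G -> FP H :=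
  @wext _ (FP H) (fun a : option G => match a with
        | None => ([:: (None, true)] : FP H)
        | Some g => ([:: (Some (f g), true)] : FP H) end).

Definition in_Z1 (L : cgrp) (b : cG L 1) : Prop :=
  geqv (gmul (cof 1 2 b) (cof 1 0 b)) (cof 1 1 b).

(* bseq L b n = b_(n+1): b_1 = b, b_(n+1) = d^(n+1)(b_n) *)
Fixpoint bseq (L : cgrp) (b : cG L 1) (n : nat) : cG L n.+1 :=
  match n return cG L n.+1 with
  | 0 => b
  | m.+1 => cof m.+1 m.+2 (bseq b m)
  end.

Definition Lb_cof0 (L : cgrp) (b : cG L 1) (n : nat) : FP (cG L n) -> FP (cG L n.+1) :=
  @wext _ (FP (cG L n.+1)) (fun a : option (cG L n) => match a with
        | None => ([:: (None, true); (Some (bseq b n), true)] : FP (cG L n.+1))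
        | Some g => ([:: (Some (cof n 0 g), true)] : FP (cG L n.+1)) end).

Definition Lb (L : cgrp) (b : cG L 1) : cgrp :=
  @CGrp (fun n => FP (cG L n))
    (fun n i => if i == 0 then @Lb_cof0 L b n else idstar_map (@cof L n i))
    (fun n i => idstar_map (@codeg L n i)).
Arguments Lb : clear implicits.

Definition iota_b (L : cgrp) (b : cG L 1) : cmap L (Lb L b) :=
  fun n g => ([:: (Some g, true)] : FP (cG L n)).

Definition idstar (C D : cgrp) (b' : cG C 1) (b : cG D 1) (h : cmap C D) :
    cmap (Lb C b') (Lb D b) :=
  fun n => idstar_map (h n).
Arguments idstar {C D} b' b h n _.

Definition a1 : cG Fc 1 := fgen 1 1.
Definition Fplus : cgrp := Lb Fc a1.
Definition iota_plus : cmap Fc Fplus := iota_b a1.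

(* Main.v *)
Require Import Defs.
From mathcomp Require Import all_boot.
From mathcomp Require Import zify.
From Stdlib Require Import Setoid Morphisms RelationClasses.
Set Implicit Arguments. Unset Strict Implicit. Unset Printing Implicit Defensive.


Class IsG (G : grp) := isG : is_group G.

#[global] Instance geqv_Equiv (G : grp) {HG : IsG G} : Equivalence (@geqv G).
Proof. split; [exact: geq_refl HG | exact: geq_sym HG | exact: geq_trans HG]. Qed.

#[global] Instance gmul_Proper (G : grp) {HG : IsG G} :
  Proper (@geqv G ==> @geqv G ==> @geqv G) (@gmul G).
Proof. move=> x x' E y y' E'; exact: (gmul_proper HG E E'). Qed.

#[global] Instance ginv_Proper (G : grp) {HG : IsG G} :
  Proper (@geqv G ==> @geqv G) (@ginv G).
Proof. move=> x x' E; exact: (ginv_proper HG E). Qed.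

#[global] Hint Extern 0 (geqv _ _) => reflexivity : core.

Section GL.
Context (G : grp) {HG : IsG G}.
Implicit Types x y z : G.
Lemma mA x y z : geqv (gmul (gmul x y) z) (gmul x (gmul y z)). Proof. exact: (@gmulA G HG x y z). Qed.
Lemma m1l x : geqv (gmul gone x) x. Proof. exact: (@gmul1l G HG x). Qed.
Lemma m1r x : geqv (gmul x gone) x. Proof. exact: (@gmul1r G HG x). Qed.
Lemma mVl x : geqv (gmul (ginv x) x) gone. Proof. exact: (@gmulVl G HG x). Qed.
Lemma mVr x : geqv (gmul x (ginv x)) gone. Proof. exact: (@gmulVr G HG x). Qed.
Lemma mKl x y : geqv (gmul (ginv x) (gmul x y)) y.
Proof. by rewrite -mA mVl m1l. Qed.
Lemma mKVl x y : geqv (gmul x (gmul (ginv x) y)) y.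
Proof. by rewrite -mA mVr m1l. Qed.
Lemma mcancl x y z : geqv (gmul x y) (gmul x z) -> geqv y z.
Proof. by move=> E; rewrite -(mKl x y) E mKl. Qed.
Lemma inv_uniq x y : geqv (gmul x y) gone -> geqv y (ginv x).
Proof. move=> E; apply: (mcancl (x:=x)). by rewrite E mVr. Qed.
Lemma one_uniq x : geqv (gmul x x) x -> geqv x gone.
Proof. move=> E; apply: (mcancl (x:=x)). by rewrite E m1r. Qed.
End GL.

Section Hom.
Context (G H : grp) {HG : IsG G} {HH : IsG H} (f : G -> H) (Hf : is_hom f).
Lemma homP x y : geqv x y -> geqv (f x) (f y). Proof. exact: (proj1 Hf). Qed.
Lemma homM x y : geqv (f (gmul x y)) (gmul (f x) (f y)). Proof. exact: (proj2 Hf). Qed.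
Lemma hom1 : geqv (f gone) gone.
Proof. apply: one_uniq. rewrite -homM. apply: homP. exact: m1l. Qed.
Lemma homV x : geqv (f (ginv x)) (ginv (f x)).
Proof. apply: inv_uniq. rewrite -homM -hom1. apply: homP. exact: mVr. Qed.
End Hom.

Lemma hom_comp (A B C : grp) {HB : IsG B} {HC : IsG C} (f : A -> B) (g : B -> C) :
  is_hom f -> is_hom g -> is_hom (fun x => g (f x)).
Proof.
move=> Hf Hg; split=> x y.
  by move=> E; apply: (homP Hg); apply: (homP Hf).
by rewrite (homP Hg (homM Hf x y)) (homM Hg).
Qed.

Section WG.
Variables (A : Type) (R : seq (A * bool) -> seq (A * bool) -> Prop).
Hypotheses (Rr : forall w, R w w) (Rs : forall w w', R w w' -> R w' w)
  (Rt : forall w1 w2 w3, R w1 w2 -> R w2 w3 -> R w1 w3)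
  (Rc : forall u v w w', R w w' -> R (u ++ w ++ v) (u ++ w' ++ v))
  (Rx : forall u v a s, R (u ++ (a, s) :: (a, ~~ s) :: v) (u ++ v)).

Lemma winv_cons (a : A * bool) w : winv (a :: w) = winv w ++ [:: (a.1, ~~ a.2)].
Proof. by rewrite /winv /= rev_cons cats1. Qed.

Lemma wg_is_group : is_group (@Grp _ R cat (@winv A) [::]).
Proof.
have Rmul : forall x x' y y', R x x' -> R y y' -> R (x ++ y) (x' ++ y').
  move=> x x' y y' E E'; apply: (Rt (w2 := x' ++ y)).
    by have := Rc [::] y E; rewrite /=.
  by have := Rc x' [::] E'; rewrite !cats0.
have Vl : forall w, R (winv w ++ w) [::].
  elim=> [|[a s] w IH] //=; rewrite winv_cons /= -catA /=.
  apply: Rt IH; have := Rx (winv w) w a (~~ s); by rewrite negbK.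
have Vr : forall w, R (w ++ winv w) [::].
  elim=> [|[a s] w IH] //=; rewrite winv_cons /= catA.
  apply: (Rt (w2 := [:: (a, s)] ++ [::] ++ [:: (a, ~~ s)])).
    by have := Rc [:: (a, s)] [:: (a, ~~ s)] IH; rewrite /= -catA.
  by have := Rx [::] [::] a s.
split=> //=.
- move=> x x' E. apply: (Rt (w2 := winv x ++ (x' ++ winv x'))).
    by have := Rmul _ _ _ _ (Rr (winv x)) (Rs (Vr x')); rewrite cats0.
  apply: (Rt (w2 := winv x ++ (x ++ winv x'))).
    exact: Rmul (Rr _) (Rmul _ _ _ _ (Rs E) (Rr _)).
  rewrite catA; have := Rmul _ _ _ _ (Vl x) (Rr (winv x')); by [].
- by move=> x y z; rewrite catA.
- by move=> x; rewrite cats0.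
Qed.
End WG.

Lemma frel_group n : is_group (Fgrp n).
Proof.
apply: wg_is_group; [exact: fr_refl|exact: fr_sym|exact: fr_trans| |exact: fr_cancel].
move=> u v w w'; elim=> {w w'}.
- by move=> w; apply: fr_refl.
- by move=> w w' _ IH; apply: fr_sym.
- by move=> w1 w2 w3 _ IH1 _ IH2; apply: fr_trans IH2.
- move=> u0 v0 a s.
  have E : forall x, u ++ (u0 ++ x) ++ v = (u ++ u0) ++ (x ++ v) by move=> x; rewrite !catA.
  rewrite !E /=; exact: fr_cancel.
Qed.

Lemma prel_group (G : grp) : is_group (FP G).
Proof.
apply: wg_is_group; [exact: pr_refl|exact: pr_sym|exact: pr_trans| |exact: pr_cancel].
move=> u v w w'.
have E : forall u0 x, u ++ (u0 ++ x) ++ v = (u ++ u0) ++ (x ++ v) by move=> u0 x; rewrite !catA.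
elim=> {w w'}.
- by move=> w; apply: pr_refl.
- by move=> w w' _ IH; apply: pr_sym.
- by move=> w1 w2 w3 _ IH1 _ IH2; apply: pr_trans IH2.
- by move=> u0 v0 a s; rewrite !E /=; exact: pr_cancel.
- by move=> u0 v0 g h; rewrite !E /=; exact: pr_mul.
- by move=> u0 v0; rewrite !E /=; exact: pr_one.
- by move=> u0 v0 g; rewrite !E /=; exact: pr_inv.
- by move=> u0 v0 g g' e; rewrite !E /=; exact: pr_eq.
Qed.

#[global] Instance Fgrp_IsG n : IsG (Fgrp n) := frel_group n.
#[global] Instance FP_IsG G : IsG (FP G) := prel_group G.

Section Wext.
Context (A : Type) (H : grp) {HH : IsG H} (phi : A -> H).

Lemma wext_cat x y : geqv (wext phi (x ++ y)) (gmul (wext phi x) (wext phi y)).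
Proof.
elim: x => [|[a s] x IH] /=; first by rewrite m1l.
by rewrite IH mA.
Qed.

Lemma wext1 a : geqv (wext phi [:: (a, true)]) (phi a).
Proof. by rewrite /= m1r. Qed.

Lemma wext_canc u v a s :
  geqv (wext phi (u ++ (a, s) :: (a, ~~ s) :: v)) (wext phi (u ++ v)).
Proof.
rewrite !wext_cat; apply: gmul_Proper => //=.
by case: s => /=; rewrite ?mKl ?mKVl.
Qed.

Lemma wext_frel w w' : Defs.frel w w' -> geqv (wext phi w) (wext phi w').
Proof.
elim=> {w w'} //.
- by move=> w w' _ IH; symmetry.
- by move=> w1 w2 w3 _ IH1 _ IH2; rewrite IH1.
- by move=> u v a s; apply: wext_canc.
Qed.
End Wext.

Section WextP.
Context (G : grp) (H : grp) {HG : IsG G} {HH : IsG H} (phi : option G -> H)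
  (Hpsi : is_hom (fun g => phi (Some g))).

Lemma wext_prel w w' : prel w w' -> geqv (wext phi w) (wext phi w').
Proof.
elim=> {w w'} //.
- by move=> w w' _ IH; symmetry.
- by move=> w1 w2 w3 _ IH1 _ IH2; rewrite IH1.
- by move=> u v a s; apply: wext_canc.
- move=> u v g h; rewrite !wext_cat; apply: gmul_Proper => //=.
  rewrite -mA; apply: gmul_Proper => //; symmetry; exact: (homM Hpsi).
- move=> u v; rewrite !wext_cat; apply: gmul_Proper => //=.
  by rewrite (hom1 Hpsi) m1l.
- move=> u v g; rewrite !wext_cat; apply: gmul_Proper => //=.
  apply: gmul_Proper => //; symmetry; exact: (homV Hpsi).
- move=> u v g g' e; rewrite !wext_cat; apply: gmul_Proper => //=.
  apply: gmul_Proper => //; exact: (homP Hpsi).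
Qed.
End WextP.

Lemma wext_hom_F n (H : grp) {HH : IsG H} (phi : 'I_n -> H) :
  is_hom (wext phi : Fgrp n -> H).
Proof. split; [exact: wext_frel | exact: wext_cat]. Qed.

Lemma wext_hom_P (G H : grp) {HG : IsG G} {HH : IsG H} (phi : option G -> H) :
  is_hom (fun g => phi (Some g)) -> is_hom (wext phi : FP G -> H).
Proof. move=> Hp; split; [exact: wext_prel | exact: wext_cat]. Qed.

Section HomExt.
Context (A : Type) (R : seq (A * bool) -> seq (A * bool) -> Prop)
  (HW : IsG (@Grp _ R cat (@winv A) [::])) (H : grp) {HH : IsG H}
  (f g : @Grp _ R cat (@winv A) [::] -> H) (Hf : is_hom f) (Hg : is_hom g).

Lemma hom_ext_wg : (forall a, geqv (f [:: (a, true)]) (g [:: (a, true)])) ->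
  forall x, geqv (f x) (g x).
Proof.
move=> E; elim=> [|[a s] x IH]; first by rewrite (hom1 Hf) (hom1 Hg).
have -> : (a, s) :: x = gmul ([:: (a, s)] : @Grp _ R cat (@winv A) [::]) x by [].
rewrite (homM Hf) (homM Hg) IH; apply: gmul_Proper => //.
case: s; first exact: E.
have -> : [:: (a, false)] = ginv ([:: (a, true)] : @Grp _ R cat (@winv A) [::]) by [].
by rewrite (homV Hf) (homV Hg) E.
Qed.
End HomExt.

Lemma hom_ext_F n (H : grp) {HH : IsG H} (f g : Fgrp n -> H) :
  is_hom f -> is_hom g -> (forall a, geqv (f [:: (a, true)]) (g [:: (a, true)])) ->
  forall x, geqv (f x) (g x).
Proof. move=> Hf Hg; exact: (@hom_ext_wg _ _ (Fgrp_IsG n) H HH f g Hf Hg). Qed.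

Lemma hom_ext_P (G H : grp) {HH : IsG H} (f g : FP G -> H) :
  is_hom f -> is_hom g -> (forall a, geqv (f [:: (a, true)]) (g [:: (a, true)])) ->
  forall x, geqv (f x) (g x).
Proof. move=> Hf Hg; exact: (@hom_ext_wg _ _ (FP_IsG G) H HH f g Hf Hg). Qed.

Definition cofidx i j : seq nat := if j < i then [:: j] else if j == i then [:: j; j.+1] else [:: j.+1].
Definition degidx i j : seq nat := if j <= i then [:: j] else if j == i.+1 then [::] else [:: j.-1].
Definition bind (f : nat -> seq nat) s := flatten (map f s).
Ltac nsolve := rewrite /bind /cofidx /degidx; repeat (simpl; match goal with
  | |- context [if ?c then _ else _] => let H := fresh in case: (boolP c) => H
  end); simpl; try (exfalso; lia); repeat f_equal; lia.

Lemma bind_cons f x s : bind f (x :: s) = f x ++ bind f s. Proof. by []. Qed.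
Lemma bind1 f x : bind f [:: x] = f x. Proof. by rewrite bind_cons cats0. Qed.

Definition gw m (s : seq nat) : Fgrp m := flatten (map (fgen m) s).
Definition inr m (j : nat) := (0 < j) && (j <= m).

Lemma gw_eq m s t : s = t -> geqv (gw m s) (gw m t). Proof. by move=> ->; reflexivity. Qed.

Lemma wext_ext (A : Type) (H : grp) (phi psi : A -> H) w :
  (forall a, phi a = psi a) -> wext phi w = wext psi w.
Proof. by move=> E; elim: w => [|[a s] w IH] //=; rewrite E IH. Qed.

Lemma fgen_ord m (o : 'I_m) : fgen m o.+1 = [:: (o, true)].
Proof. by rewrite /fgen valK. Qed.

Lemma gw_cat m s t : gw m (s ++ t) = gw m s ++ gw m t.
Proof. by rewrite /gw map_cat flatten_cat. Qed.

Lemma gw1 m (o : 'I_m) : gw m [:: o.+1] = [:: (o, true)].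
Proof. by rewrite /gw /= cats0 valK. Qed.

Lemma Fcof_E n i x : @Fcof n i x = wext (fun o : 'I_n => gw n.+1 (cofidx i o.+1)) x.
Proof.
apply: wext_ext => o; rewrite /gw /cofidx.
by case: ifP => _ //=; rewrite ?cats0 //; case: ifP => _ /=; rewrite ?cats0.
Qed.

Lemma Fcodeg_E n i x : @Fcodeg n i x = wext (fun o : 'I_n.+1 => gw n (degidx i o.+1)) x.
Proof.
apply: wext_ext => o; rewrite /gw /degidx.
by case: ifP => _ //=; rewrite ?cats0 //; case: ifP => _ /=; rewrite ?cats0.
Qed.

Lemma Fcof_hom n i : is_hom (@Fcof n i).
Proof. exact: wext_hom_F. Qed.
Lemma Fcodeg_hom n i : is_hom (@Fcodeg n i).
Proof. exact: wext_hom_F. Qed.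

Lemma ord_of m j : inr m j -> exists o : 'I_m, j = o.+1.
Proof.
case: j => // j /andP[_ Hj]; by exists (Ordinal Hj).
Qed.

Lemma Fcof_gw n i s : all (inr n) s ->
  geqv (@Fcof n i (gw n s)) (gw n.+1 (bind (cofidx i) s)).
Proof.
elim: s => [|j s IH]; first by move=> _; reflexivity.
case/andP=> /ord_of [o ->] /IH {}IH.
have -> : gw n (o.+1 :: s) = gmul (gw n [:: o.+1]) (gw n s).
  by change (gw n (o.+1 :: s) = gw n [:: o.+1] ++ gw n s); rewrite -gw_cat.
rewrite (homM (Fcof_hom n i)) IH gw1 Fcof_E wext1.
rewrite bind_cons gw_cat; reflexivity.
Qed.

Lemma Fcodeg_gw n i s : all (inr n.+1) s ->
  geqv (@Fcodeg n i (gw n.+1 s)) (gw n (bind (degidx i) s)).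
Proof.
elim: s => [|j s IH]; first by move=> _; reflexivity.
case/andP=> /ord_of [o ->] /IH {}IH.
have -> : gw n.+1 (o.+1 :: s) = gmul (gw n.+1 [:: o.+1]) (gw n.+1 s).
  by change (gw n.+1 (o.+1 :: s) = gw n.+1 [:: o.+1] ++ gw n.+1 s); rewrite -gw_cat.
rewrite (homM (Fcodeg_hom n i)) IH gw1 Fcodeg_E wext1.
rewrite bind_cons gw_cat; reflexivity.
Qed.

Lemma inr_cof n i s : all (inr n) s -> all (inr n.+1) (bind (cofidx i) s).
Proof.
elim: s => [|j s IH] //= /andP[Hj /IH]; rewrite /bind /= all_cat => ->; rewrite andbT.
move: Hj; rewrite /inr /cofidx => /andP[??].
case: ifP => _ /=; [|case: ifP => _ /=]; apply/andP; split; rewrite ?andbT; lia.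
Qed.

Lemma inr_deg n i s : i <= n -> all (inr n.+1) s -> all (inr n) (bind (degidx i) s).
Proof.
move=> Hi; elim: s => [|j s IH] //= /andP[Hj /IH]; rewrite /bind /= all_cat => ->; rewrite andbT.
move: Hj; rewrite /inr /degidx => /andP[??].
case: ifP => ? /=; [|case: ifP => ? /=]; rewrite ?andbT //; apply/andP; split; lia.
Qed.

Lemma inr1 n (o : 'I_n) : all (inr n) [:: o.+1].
Proof. by rewrite /= /inr ltn_ord. Qed.

Lemma Fc_cosimplicial : is_cosimplicial_group Fc.
Proof.
split.
- move=> n; exact: frel_group.
- move=> n i _; exact: Fcof_hom.
- move=> n i _; exact: Fcodeg_hom.
- move=> n i j x lij ljn /=.
  apply: (hom_ext_F (f := fun x => @Fcof n.+1 j (@Fcof n i x)) (g := fun x => @Fcof n.+1 i (@Fcof n j.-1 x))); try (apply: hom_comp; exact: Fcof_hom).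
  move=> o; rewrite -gw1.
  rewrite (homP (@Fcof_hom _ _) (@Fcof_gw _ _ _ (inr1 o))) (homP (@Fcof_hom _ _) (@Fcof_gw _ _ _ (inr1 o))).
  rewrite !Fcof_gw; try (apply: inr_cof; exact: inr1).
  have := ltn_ord o; rewrite ?bind1 => Ho.
  apply: gw_eq; nsolve.
- move=> n i j x lij ljn /=.
  apply: (hom_ext_F (f := fun x => @Fcodeg n.+1 j (@Fcof n.+1 i x)) (g := fun x => @Fcof n i (@Fcodeg n j.-1 x))); try (apply: hom_comp; [exact: Fcof_hom|exact: Fcodeg_hom] || (apply: hom_comp; [exact: Fcodeg_hom|exact: Fcof_hom])).
  move=> o; rewrite -gw1.
  rewrite (homP (@Fcodeg_hom _ _) (@Fcof_gw _ _ _ (inr1 o))) (homP (@Fcof_hom _ _) (@Fcodeg_gw _ _ _ (inr1 o))).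
  rewrite Fcodeg_gw; last by apply: inr_cof; exact: inr1.
  rewrite Fcof_gw; last by apply: inr_deg; [lia|exact: inr1].
  have := ltn_ord o; rewrite ?bind1 => Ho.
  apply: gw_eq; nsolve.
- move=> n j x ljn /=.
  apply: (hom_ext_F (f := fun x => @Fcodeg n j (@Fcof n j x)) (g := id)); first (apply: hom_comp; [exact: Fcof_hom|exact: Fcodeg_hom]).
    by split=> // x' y'.
  move=> o; rewrite -gw1.
  rewrite (homP (@Fcodeg_hom _ _) (@Fcof_gw _ _ _ (inr1 o))).
  rewrite Fcodeg_gw; last by apply: inr_cof; exact: inr1.
  have := ltn_ord o; rewrite ?bind1 => Ho.
  apply: gw_eq; nsolve.
- move=> n j x ljn /=.
  apply: (hom_ext_F (f := fun x => @Fcodeg n j (@Fcof n j.+1 x)) (g := id)); first (apply: hom_comp; [exact: Fcof_hom|exact: Fcodeg_hom]).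
    by split=> // x' y'.
  move=> o; rewrite -gw1.
  rewrite (homP (@Fcodeg_hom _ _) (@Fcof_gw _ _ _ (inr1 o))).
  rewrite Fcodeg_gw; last by apply: inr_cof; exact: inr1.
  have := ltn_ord o; rewrite ?bind1 => Ho.
  apply: gw_eq; nsolve.
- move=> n i j x lij ljn /=.
  apply: (hom_ext_F (f := fun x => @Fcodeg n.+1 j (@Fcof n.+1 i x)) (g := fun x => @Fcof n i.-1 (@Fcodeg n j x))); try (apply: hom_comp; [exact: Fcof_hom|exact: Fcodeg_hom] || (apply: hom_comp; [exact: Fcodeg_hom|exact: Fcof_hom])).
  move=> o; rewrite -gw1.
  rewrite (homP (@Fcodeg_hom _ _) (@Fcof_gw _ _ _ (inr1 o))) (homP (@Fcof_hom _ _) (@Fcodeg_gw _ _ _ (inr1 o))).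
  rewrite Fcodeg_gw; last by apply: inr_cof; exact: inr1.
  rewrite Fcof_gw; last by apply: inr_deg; [lia|exact: inr1].
  have := ltn_ord o; rewrite ?bind1 => Ho.
  apply: gw_eq; nsolve.
- move=> n i j x lij ljn /=.
  apply: (hom_ext_F (f := fun x => @Fcodeg n j (@Fcodeg n.+1 i x)) (g := fun x => @Fcodeg n i (@Fcodeg n.+1 j.+1 x))); try (apply: hom_comp; exact: Fcodeg_hom).
  move=> o; rewrite -gw1.
  rewrite (homP (@Fcodeg_hom _ _) (@Fcodeg_gw _ _ _ (inr1 o))) (homP (@Fcodeg_hom _ _) (@Fcodeg_gw _ _ _ (inr1 o))).
  rewrite !Fcodeg_gw; try (apply: inr_deg; [lia|exact: inr1]).
  have := ltn_ord o; rewrite ?bind1 => Ho.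
  apply: gw_eq; nsolve.
Qed.

Definition sing (G : grp) (g : G) : FP G := [:: (Some g, true)].
Definition nn (G : grp) : FP G := [:: (None, true)].
Arguments nn {G}.

Lemma sing_hom (G : grp) {HG : IsG G} : is_hom (@sing G).
Proof.
split=> [x y E|x y]; first exact: (pr_eq [::] [::] E).
exact: (pr_sym (pr_mul [::] [::] x y)).
Qed.

Lemma idstar_hom (G H : grp) {HG : IsG G} {HH : IsG H} (f : G -> H) :
  is_hom f -> is_hom (idstar_map f).
Proof. move=> Hf; apply: wext_hom_P; exact: (hom_comp Hf (sing_hom (G:=H))). Qed.

Lemma idstar_S (G H : grp) (f : G -> H) g :
  geqv (idstar_map f (sing g)) (sing (f g)).
Proof. exact: wext1. Qed.
Lemma idstar_N (G H : grp) (f : G -> H) :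
  geqv (idstar_map f nn) nn.
Proof. exact: wext1. Qed.

Section LbSec.
Variables (L : cgrp) (b : cG L 1).
Hypotheses (HL : is_cosimplicial_group L) (Hb : in_Z1 b).
Local Instance IL n : IsG (cG L n) := cs_group HL n.

Lemma cofH n i : i <= n.+1 -> is_hom (@cof L n i).
Proof. exact: cs_cof_hom. Qed.
Lemma codegH n i : i <= n -> is_hom (@codeg L n i).
Proof. exact: cs_codeg_hom. Qed.

Lemma B1 n j : 2 <= j <= n.+2 -> geqv (cof n.+1 j (Defs.bseq b n)) (Defs.bseq b n.+1).
Proof.
elim: n j => [|n IH] j Hj.
  by have -> : j = 2 by lia.
case: (ltngtP j n.+3) => [lt|gt|->]; last by []; last by lia.
rewrite /= -(cs_dd HL (i := j) (j := n.+3)); try lia.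
rewrite /= -(homP (cofH (n:=n.+2) (i:=n.+3) _) (IH j _)) //; lia.
Qed.

Lemma B2 n : geqv (cof n.+1 1 (Defs.bseq b n)) (gmul (Defs.bseq b n.+1) (cof n.+1 0 (Defs.bseq b n))).
Proof.
elim: n => [|n IH]; first by symmetry; exact: Hb.
rewrite /= -(cs_dd HL (i := 1) (j := n.+3)) //.
rewrite (homP (cofH (n:=n.+2) (i:=n.+3) _) IH) //.
rewrite (homM (cofH (n:=n.+2) (i:=n.+3) _)) //.
apply: gmul_Proper => //.
exact: (cs_dd HL (i := 0) (j := n.+3)).
Qed.

Lemma B3 n : geqv (codeg n 0 (Defs.bseq b n)) gone.
Proof.
elim: n => [|n IH].
  have E1 := homP (codegH (n:=1) (i:=0) isT) Hb.
  rewrite (homM (codegH (n:=1) (i:=0) isT)) in E1.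
  rewrite (cs_sd_gt HL (n:=0) (i:=2) (j:=0)) // in E1.
  rewrite (cs_sd_eq HL (n:=1) (j:=0)) // in E1.
  rewrite (cs_sd_eqS HL (n:=1) (j:=0)) // in E1.
  have E2 : geqv (cof 0 1 (codeg 0 0 b)) gone.
    have E1' : geqv (gmul (cof 0 1 (codeg 0 0 b)) b) b by exact: E1.
    transitivity (gmul (gmul (cof 0 1 (codeg 0 0 b)) b) (ginv b)).
      by rewrite mA mVr m1r.
    by rewrite E1' mVr.
  rewrite -(cs_sd_eqS HL (n:=0) (j:=0) (codeg 0 0 b)) //.
  rewrite (homP (codegH (n:=0) (i:=0) isT) E2).
  exact: (hom1 (codegH (n:=0) (i:=0) isT)).
rewrite /= (cs_sd_gt HL (n:=n) (i:=n.+2) (j:=0)) //.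
rewrite (homP (cofH (n:=n) (i:=n.+1) _) IH) //.
exact: (hom1 (cofH (n:=n) (i:=n.+1) _)).
Qed.

Lemma B4 n j : 1 <= j <= n.+1 -> geqv (codeg n.+1 j (Defs.bseq b n.+1)) (Defs.bseq b n).
Proof.
elim: n j => [|n IH] j Hj.
  have -> : j = 1 by lia.
  exact: (cs_sd_eqS HL (n:=1) (j:=1)).
case: (ltngtP j n.+2) => [lt|gt|->]; last first.
- exact: (cs_sd_eqS HL (n:=n.+2) (j:=n.+2)).
- lia.
rewrite /= (cs_sd_gt HL (n:=n.+1) (i:=n.+3) (j:=j)) //; try lia.
rewrite (homP (cofH (n:=n.+1) (i:=n.+2) _) (IH j _)) //; lia.
Qed.


Notation LB := (Lb L b).
Lemma eqS0 k : (k.+1 == 0) = false. Proof. by []. Qed.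

Lemma cofbE n i : @cof LB n i = if i == 0 then @Lb_cof0 L b n else idstar_map (@cof L n i).
Proof. by []. Qed.
Lemma codegbE n i : @codeg LB n i = idstar_map (@codeg L n i).
Proof. by []. Qed.

Lemma cofbH n i : i <= n.+1 -> is_hom (@cof LB n i).
Proof.
move=> Hi; rewrite cofbE; case: (i == 0) => //.
  apply: wext_hom_P; exact: (hom_comp (cofH (n:=n) (i:=0) isT) (sing_hom (G:=cG L n.+1))).
exact: idstar_hom (cofH Hi).
Qed.
Lemma codegbH n i : i <= n -> is_hom (@codeg LB n i).
Proof. move=> Hi; rewrite codegbE; exact: idstar_hom (codegH Hi). Qed.

Lemma cofbS n i g : geqv (cof (c:=LB) n i (sing g)) (sing (cof n i g)).
Proof. rewrite cofbE; case: eqP => [->|_]; exact: wext1. Qed.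
Lemma cofbN n i : geqv (cof (c:=LB) n i nn)
   (if i == 0 then gmul nn (sing (Defs.bseq b n)) else nn).
Proof. rewrite cofbE; case: (i == 0); exact: wext1. Qed.
Lemma codegbS n i g : geqv (codeg (c:=LB) n i (sing g)) (sing (codeg n i g)).
Proof. exact: wext1. Qed.
Lemma codegbN n i : geqv (codeg (c:=LB) n i nn) nn.
Proof. exact: wext1. Qed.

Ltac homs := first [ apply: hom_comp; (apply: cofbH || apply: codegbH); lia
                   | (apply: cofbH || apply: codegbH); lia ].

Lemma Lb_cosimplicial : is_cosimplicial_group LB.
Proof.
split.
- move=> n; exact: FP_IsG.
- move=> n i Hi; exact: cofbH.
- move=> n i Hi; exact: codegbH.
- move=> n i j x lij ljn.
  apply: (hom_ext_P (f := fun x => cof (c:=LB) n.+1 j (cof (c:=LB) n i x))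
                    (g := fun x => cof (c:=LB) n.+1 i (cof (c:=LB) n j.-1 x))); try homs.
  case=> [g|].
    change (geqv (cof (c:=LB) n.+1 j (cof (c:=LB) n i (sing g)))
                 (cof (c:=LB) n.+1 i (cof (c:=LB) n j.-1 (sing g)))).
    rewrite (homP (cofbH _) (@cofbS n i g)); last lia.
    rewrite (homP (cofbH _) (@cofbS n j.-1 g)); last lia.
    rewrite !cofbS; apply: (homP sing_hom); exact: (cs_dd HL).
  change (geqv (cof (c:=LB) n.+1 j (cof (c:=LB) n i nn))
               (cof (c:=LB) n.+1 i (cof (c:=LB) n j.-1 nn))).
  rewrite (homP (cofbH _) (@cofbN n i)); last lia.
  rewrite (homP (cofbH _) (@cofbN n j.-1)); last lia.
  case: i lij => [|i] lij; last first.
    have -> : (j.-1 == 0) = false by lia.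
    rewrite eqS0 !cofbN eqS0; have -> : (j == 0) = false by lia. reflexivity.
  rewrite eqxx (homM (cofbH _)); last lia.
  rewrite cofbN cofbS; have -> : (j == 0) = false by lia.
  case: j lij ljn => [|[|j]] // lij ljn.
    have -> : (1.-1 == 0) = true by [].
    rewrite (homM (cofbH _)) // cofbN cofbS eqxx mA.
    apply: gmul_Proper => //; rewrite -(homM sing_hom).
    apply: (homP sing_hom); exact: B2.
  have -> : (j.+2.-1 == 0) = false by [].
  rewrite cofbN eqxx; apply: gmul_Proper => //; apply: (homP sing_hom).
  apply: B1; lia.
- move=> n i j x lij ljn.
  apply: (hom_ext_P (f := fun x => codeg (c:=LB) n.+1 j (cof (c:=LB) n.+1 i x))
                    (g := fun x => cof (c:=LB) n i (codeg (c:=LB) n j.-1 x))); try homs.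
  case=> [g|].
    change (geqv (codeg (c:=LB) n.+1 j (cof (c:=LB) n.+1 i (sing g)))
                 (cof (c:=LB) n i (codeg (c:=LB) n j.-1 (sing g)))).
    rewrite (homP (codegbH _) (@cofbS n.+1 i g)); last lia.
    rewrite (homP (cofbH _) (@codegbS n j.-1 g)); last lia.
    rewrite codegbS cofbS; apply: (homP sing_hom); exact: (cs_sd_lt HL).
  change (geqv (codeg (c:=LB) n.+1 j (cof (c:=LB) n.+1 i nn))
               (cof (c:=LB) n i (codeg (c:=LB) n j.-1 nn))).
  rewrite (homP (codegbH _) (@cofbN n.+1 i)); last lia.
  rewrite (homP (cofbH _) (@codegbN n j.-1)); last lia.
  rewrite cofbN; case: i lij => [|i] lij; last by rewrite eqS0 codegbN.
  rewrite eqxx.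
  rewrite (homM (codegbH _)); last lia.
  rewrite codegbN codegbS; apply: gmul_Proper => //; apply: (homP sing_hom).
  apply: B4; lia.
- move=> n j x ljn.
  apply: (hom_ext_P (f := fun x => codeg (c:=LB) n j (cof (c:=LB) n j x)) (g := id)); try homs.
    by split.
  case=> [g|].
    change (geqv (codeg (c:=LB) n j (cof (c:=LB) n j (sing g))) (sing g)).
    rewrite (homP (codegbH _) (@cofbS n j g)) // codegbS.
    apply: (homP sing_hom); exact: (cs_sd_eq HL).
  change (geqv (codeg (c:=LB) n j (cof (c:=LB) n j nn)) nn).
  rewrite (homP (codegbH _) (@cofbN n j)) //.
  case: j ljn => [|j] ljn; last by rewrite eqS0 codegbN.
  rewrite eqxx.
  rewrite (homM (codegbH _)) // codegbN codegbS.
  rewrite (homP sing_hom (B3 n)) (hom1 sing_hom); exact: m1r.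
- move=> n j x ljn.
  apply: (hom_ext_P (f := fun x => codeg (c:=LB) n j (cof (c:=LB) n j.+1 x)) (g := id)); try homs.
    by split.
  case=> [g|].
    change (geqv (codeg (c:=LB) n j (cof (c:=LB) n j.+1 (sing g))) (sing g)).
    rewrite (homP (codegbH _) (@cofbS n j.+1 g)) // codegbS.
    apply: (homP sing_hom); exact: (cs_sd_eqS HL).
  change (geqv (codeg (c:=LB) n j (cof (c:=LB) n j.+1 nn)) nn).
  by rewrite (homP (codegbH _) (@cofbN n j.+1)) // eqS0 codegbN.
- move=> n i j x lij ljn.
  apply: (hom_ext_P (f := fun x => codeg (c:=LB) n.+1 j (cof (c:=LB) n.+1 i x))
                    (g := fun x => cof (c:=LB) n i.-1 (codeg (c:=LB) n j x))); try homs.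
  case=> [g|].
    change (geqv (codeg (c:=LB) n.+1 j (cof (c:=LB) n.+1 i (sing g)))
                 (cof (c:=LB) n i.-1 (codeg (c:=LB) n j (sing g)))).
    rewrite (homP (codegbH _) (@cofbS n.+1 i g)); last lia.
    rewrite (homP (cofbH _) (@codegbS n j g)); last lia.
    rewrite codegbS cofbS; apply: (homP sing_hom); exact: (cs_sd_gt HL).
  change (geqv (codeg (c:=LB) n.+1 j (cof (c:=LB) n.+1 i nn))
               (cof (c:=LB) n i.-1 (codeg (c:=LB) n j nn))).
  rewrite (homP (codegbH _) (@cofbN n.+1 i)); last lia.
  rewrite (homP (cofbH _) (@codegbN n j)); last lia.
  rewrite cofbN; have -> : (i == 0) = false by lia.
  have -> : (i.-1 == 0) = false by lia.
  exact: codegbN.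
- move=> n i j x lij ljn.
  apply: (hom_ext_P (f := fun x => codeg (c:=LB) n j (codeg (c:=LB) n.+1 i x))
                    (g := fun x => codeg (c:=LB) n i (codeg (c:=LB) n.+1 j.+1 x))); try homs.
  case=> [g|].
    change (geqv (codeg (c:=LB) n j (codeg (c:=LB) n.+1 i (sing g)))
                 (codeg (c:=LB) n i (codeg (c:=LB) n.+1 j.+1 (sing g)))).
    rewrite (homP (codegbH _) (@codegbS n.+1 i g)); last lia.
    rewrite (homP (codegbH _) (@codegbS n.+1 j.+1 g)); last lia.
    rewrite !codegbS; apply: (homP sing_hom); exact: (cs_ss HL).
  change (geqv (codeg (c:=LB) n j (codeg (c:=LB) n.+1 i nn))
               (codeg (c:=LB) n i (codeg (c:=LB) n.+1 j.+1 nn))).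
  rewrite (homP (codegbH _) (@codegbN n.+1 i)); last lia.
  rewrite (homP (codegbH _) (@codegbN n.+1 j.+1)); last lia.
  by rewrite !codegbN.
Qed.

End LbSec.

Lemma a1gw : a1 = gw 1 [:: 1]. Proof. by rewrite /gw /= cats0. Qed.
Lemma a1Z : in_Z1 a1.
Proof.
rewrite /in_Z1 a1gw.
have H1 : all (inr 1) [:: 1] by [].
change (geqv (gmul (@Fcof 1 2 (gw 1 [::1])) (@Fcof 1 0 (gw 1 [::1]))) (@Fcof 1 1 (gw 1 [::1]))).
rewrite (@Fcof_gw 1 2 _ H1) (@Fcof_gw 1 0 _ H1) (@Fcof_gw 1 1 _ H1).
change (geqv (gw 2 (bind (cofidx 2) [:: 1]) ++ gw 2 (bind (cofidx 0) [:: 1]) : Fgrp 2) (gw 2 (bind (cofidx 1) [:: 1]))).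
rewrite -gw_cat; apply: gw_eq; by [].
Qed.

Lemma iota_cmorph (L : cgrp) (b : cG L 1) : is_cosimplicial_group L -> is_cmorph (iota_b b).
Proof.
move=> HL; have IL : forall n, IsG (cG L n) := cs_group HL.
split; [|split].
- move=> n; exact: sing_hom.
- move=> n i x _; symmetry; exact: cofbS.
- move=> n i x _; symmetry; exact: codegbS.
Qed.

Lemma hb_seq (L : cgrp) (b : cG L 1) (h : cmap Fc L) :
  is_cosimplicial_group L -> is_cmorph h -> geqv (h 1 a1) b ->
  forall n, geqv (h n.+1 (Defs.bseq a1 n)) (Defs.bseq b n).
Proof.
move=> HL Hh Hb1; have IL : forall n, IsG (cG L n) := cs_group HL.
elim=> [|n IH] //=.
rewrite (proj1 (proj2 Hh)) //.
exact: (homP (cofH HL (n:=n.+1) (i:=n.+2) (leqnn _)) IH).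
Qed.

Unset Implicit Arguments.
Theorem proposition3p4 (L : cgrp) (b : cG L 1) (h : cmap Fc L) :
  is_cosimplicial_group L -> in_Z1 b ->
  is_cmorph h -> geqv (h 1 a1) b ->
  is_pushout iota_plus h (idstar a1 b h) (iota_b b).
Proof.
move=> HL Hb Hh Hb1.
have IL : forall n, IsG (cG L n) := cs_group HL.
have HF := Fc_cosimplicial.
have HFp : is_cosimplicial_group Fplus := Lb_cosimplicial HF a1Z.
have HLb : is_cosimplicial_group (Lb L b) := Lb_cosimplicial HL Hb.
have hH : forall n, is_hom (h n) := proj1 Hh.
have hC := proj1 (proj2 Hh).
have hD := proj2 (proj2 Hh).
have idH : forall n, is_hom (idstar a1 b h n).
  move=> n; exact: idstar_hom (hH n).
split; [by []|split; [split|split]].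
- exact: iota_cmorph.
- exact: Hh.
- split; [exact: idH|split].
  + move=> n i x Hi.
    apply: (hom_ext_P (f := fun x => idstar a1 b h n.+1 (cof (c:=Fplus) n i x))
                      (g := fun x => cof (c:=Lb L b) n i (idstar a1 b h n x))).
    * exact: hom_comp (cofbH a1 HF Hi) (idH _).
    * exact: hom_comp (idH _) (cofbH b HL Hi).
    case=> [g|].
      change (geqv (idstar a1 b h n.+1 (cof (c:=Fplus) n i (sing g)))
                   (cof (c:=Lb L b) n i (idstar_map (h n) (sing g)))).
      rewrite (homP (idH _) (@cofbS _ a1 n i g)).
      rewrite (homP (cofbH b HL Hi) (idstar_S _ _)).
      rewrite /idstar idstar_S cofbS; apply: (homP sing_hom); exact: hC.
    change (geqv (idstar a1 b h n.+1 (cof (c:=Fplus) n i nn))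
                 (cof (c:=Lb L b) n i (idstar_map (h n) nn))).
    rewrite (homP (idH _) (@cofbN _ a1 n i)).
    rewrite (homP (cofbH b HL Hi) (idstar_N _)) cofbN.
    case: (i == 0); last exact: idstar_N.
    rewrite /idstar (homM (idstar_hom (hH _))) idstar_N idstar_S.
    apply: gmul_Proper => //; apply: (homP sing_hom); exact: hb_seq.
  + move=> n i x Hi.
    apply: (hom_ext_P (f := fun x => idstar a1 b h n (codeg (c:=Fplus) n i x))
                      (g := fun x => codeg (c:=Lb L b) n i (idstar a1 b h n.+1 x))).
    * exact: hom_comp (codegbH a1 HF Hi) (idH _).
    * exact: hom_comp (idH _) (codegbH b HL Hi).
    case=> [g|].
      change (geqv (idstar a1 b h n (codeg (c:=Fplus) n i (sing g)))
                   (codeg (c:=Lb L b) n i (idstar_map (h n.+1) (sing g)))).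
      rewrite (homP (idH _) (@codegbS _ a1 n i g)).
      rewrite (homP (codegbH b HL Hi) (idstar_S _ _)).
      rewrite /idstar idstar_S codegbS; apply: (homP sing_hom); exact: hD.
    change (geqv (idstar a1 b h n (codeg (c:=Fplus) n i nn))
                 (codeg (c:=Lb L b) n i (idstar_map (h n.+1) nn))).
    rewrite (homP (idH _) (@codegbN _ a1 n i)).
    rewrite (homP (codegbH b HL Hi) (idstar_N _)) codegbN.
    exact: idstar_N.
- exact: iota_cmorph.
- move=> n x; rewrite /ccomp; exact: idstar_S.
move=> M HM u v Hu Hv Huv.
have IM : forall n, IsG (cG M n) := cs_group HM.
have uH : forall n, is_hom (u n) := proj1 Hu.
have vH : forall n, is_hom (v n) := proj1 Hv.
pose w : cmap (Lb L b) M := fun n => wext (fun a : option (cG L n) =>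
   match a with None => u n nn | Some g => v n g end).
have wH : forall n, is_hom (w n).
  move=> n; apply: wext_hom_P; exact: vH.
have wS : forall n g, geqv (w n (sing g)) (v n g) by move=> n g; exact: wext1.
have wN : forall n, geqv (w n nn) (u n nn) by move=> n; exact: wext1.
exists w; split.
- split; [exact: wH|split].
  + move=> n i x Hi.
    apply: (hom_ext_P (f := fun x => w n.+1 (cof (c:=Lb L b) n i x))
                      (g := fun x => cof (c:=M) n i (w n x))).
    * exact: hom_comp (cofbH b HL Hi) (wH _).
    * exact: hom_comp (wH _) (cs_cof_hom HM Hi).
    case=> [g|].
      change (geqv (w n.+1 (cof (c:=Lb L b) n i (sing g))) (cof (c:=M) n i (w n (sing g)))).
      rewrite (homP (wH _) (cofbS _ _ _)) wS.
      rewrite (homP (cs_cof_hom HM Hi) (wS _ _)).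
      exact: (proj1 (proj2 Hv)).
    change (geqv (w n.+1 (cof (c:=Lb L b) n i nn)) (cof (c:=M) n i (w n nn))).
    rewrite (homP (wH _) (cofbN _ _ _)).
    rewrite (homP (cs_cof_hom HM Hi) (wN _)).
    rewrite -(proj1 (proj2 Hu)) //.
    rewrite (homP (uH _) (@cofbN _ a1 n i)).
    case: (i == 0); last exact: wN.
    rewrite (homM (wH _)) (homM (uH _)) wN wS; apply: gmul_Proper => //.
    rewrite -(homP (vH _) (hb_seq HL Hh Hb1 n)).
    symmetry; exact: Huv.
  + move=> n i x Hi.
    apply: (hom_ext_P (f := fun x => w n (codeg (c:=Lb L b) n i x))
                      (g := fun x => codeg (c:=M) n i (w n.+1 x))).
    * exact: hom_comp (codegbH b HL Hi) (wH _).
    * exact: hom_comp (wH _) (cs_codeg_hom HM Hi).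
    case=> [g|].
      change (geqv (w n (codeg (c:=Lb L b) n i (sing g))) (codeg (c:=M) n i (w n.+1 (sing g)))).
      rewrite (homP (wH _) (codegbS _ _ _)) wS.
      rewrite (homP (cs_codeg_hom HM Hi) (wS _ _)).
      exact: (proj2 (proj2 Hv)).
    change (geqv (w n (codeg (c:=Lb L b) n i nn)) (codeg (c:=M) n i (w n.+1 nn))).
    rewrite (homP (wH _) (codegbN _ _ _)) wN.
    rewrite (homP (cs_codeg_hom HM Hi) (wN _)).
    rewrite -(proj2 (proj2 Hu)) //.
- move=> n; apply: (hom_ext_P (f := fun x => w n (idstar a1 b h n x)) (g := u n)).
  + exact: hom_comp (idH _) (wH _).
  + exact: uH.
  case=> [g|].
    change (geqv (w n (idstar_map (h n) (sing g))) (u n (sing g))).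
    rewrite (homP (wH _) (idstar_S _ _)) wS; symmetry; exact: Huv.
  change (geqv (w n (idstar_map (h n) nn)) (u n nn)).
  by rewrite (homP (wH _) (idstar_N _)) wN.
- move=> n x; exact: wS.
move=> w' Hw' Hr Hbot n.
apply: (hom_ext_P (f := w' n) (g := w n)); [exact: (proj1 Hw')|exact: wH|].
case=> [g|].
  change (geqv (w' n (sing g)) (w n (sing g))).
  rewrite wS; exact: Hbot.
change (geqv (w' n nn) (w n nn)).
rewrite wN -(Hr n nn) /ccomp.
symmetry; apply: (homP (proj1 Hw' n)); exact: idstar_N.
Qed.
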